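(* Let $\lambda_1,\dots,\lambda_p\ge0$ be pairwise distinct, $\Sigma=\mathrm{diag}(\lambda_1,\dots,\lambda_p)$, $E$ a real symmetric $p\times p$ matrix, $\widehat\Sigma=\Sigma+E$, $x$ an eigenvalue of $\widehat\Sigma$, and $k\in\arg\min_m|\lambda_m-x|$. Let $\Lambda_k=|D_k|^{1/2}E|D_k|^{1/2}$ and suppose $\|\Lambda_k\|<1$. Then $I_p-D_kEP_k$ is invertible, and every eigenvector $\vec\eta$ of $\widehat\Sigma$ for $x$ satisfies $\langle\vec\eta,\vec\mu_k\rangle\ne0$; normalizing so that $\langle\vec\eta,\vec\mu_k\rangle=1$, we have $$\|\vec\eta-\vec\mu_k\|\le\sqrt{\frac{2}{\delta_k}}\;\frac{1}{1-\|\Lambda_k\|}\;\Bigl(\sum_{j\ne k}\frac{E_{jk}^2}{|\lambda_j-x|}\Bigr)^{1/2}.$$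
   Context: $\vec\mu_1,\dots,\vec\mu_p$ are the standard basis vectors of $\mathbb R^p$; $\|\cdot\|$ is the Euclidean norm for vectors and operator norm for matrices; $\delta_k=\min_{j\ne k}|\lambda_k-\lambda_j|$. $P_k$ is the diagonal matrix with entry $0$ at position $k$ and $1$ elsewhere. $D_k=-\mathrm{diag}(d_1,\dots,d_p)$ with $d_j=1/(\lambda_j-x)$ for $j\ne k$ and $d_k=0$ (well defined since $x\ne\lambda_j$ for $j\neq k$ by the choice of $k$). $|D_k|^{1/2}$ is the diagonal matrix with entries $|\lambda_j-x|^{-1/2}$ for $j\ne k$ and $0$ at position $k$. *)

(* Defs.v *)
From HB Require Import structures.
From mathcomp Require Import all_boot all_order all_algebra.
Set Implicit Arguments. Unset Strict Implicit. Unset Printing Implicit Defensive.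
Import Order.TTheory GRing.Theory Num.Theory.
Local Open Scope ring_scope.

Section Defs.
Variable R : rcfType.
Variable p : nat.

Definition vnorm (v : 'cV[R]_p) : R := Num.sqrt (\sum_i (v i 0) ^+ 2).

Definition is_opnorm (A : 'M[R]_p) (c : R) : Prop :=
  (forall v : 'cV[R]_p, vnorm (A *m v) <= c * vnorm v) /\
  (forall c' : R, (forall v : 'cV[R]_p, vnorm (A *m v) <= c' * vnorm v) -> c <= c').

Definition mu (k : 'I_p) : 'cV[R]_p := delta_mx k 0.

Definition Sigma (lam : 'I_p -> R) : 'M[R]_p := diag_mx (\row_j lam j).

Definition Pk (k : 'I_p) : 'M[R]_p := diag_mx (\row_j (if j == k then 0 else 1)).

Definition Dk (lam : 'I_p -> R) (x : R) (k : 'I_p) : 'M[R]_p :=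
  diag_mx (\row_j (if j == k then 0 else - (lam j - x)^-1)).

Definition absDk_half (lam : 'I_p -> R) (x : R) (k : 'I_p) : 'M[R]_p :=
  diag_mx (\row_j (if j == k then 0 else (Num.sqrt `|lam j - x|)^-1)).

(* The big min is seeded with
   \sum_j |lambda_k - lambda_j|, which dominates every term, so for p >= 2 this
   is exactly the minimum; for p = 1 (empty min) it is 0, a value irrelevant
   since the remaining factor of the bound is then an empty sum. *)
Definition delta (lam : 'I_p -> R) (k : 'I_p) : R :=
  \big[Num.min/ \sum_j `|lam k - lam j|]_(j | j != k) `|lam k - lam j|.

End Defs.
Arguments mu {R p} k.
Arguments Pk {R p} k.

(* Main.v *)
Require Import Defs.
From HB Require Import structures.
From mathcomp Require Import all_boot all_order all_algebra.
From mathcomp Require Import ring lra.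
Import Order.TTheory GRing.Theory Num.Theory.
Local Open Scope ring_scope.

Section Aux.
Variable R : rcfType.
Variable p : nat.
Implicit Types a b : 'cV[R]_p.

Lemma vnorm_ge0 a : 0 <= vnorm a.
Proof. exact: sqrtr_ge0. Qed.

Lemma vnorm_sq a : vnorm a ^+ 2 = \sum_i (a i 0) ^+ 2.
Proof. by rewrite sqr_sqrtr // sumr_ge0 // => i _; rewrite sqr_ge0. Qed.

Lemma vnorm_eq0 a : vnorm a = 0 -> a = 0.
Proof.
move=> /eqP; rewrite sqrtr_eq0 => H.
have H0 : \sum_i (a i 0) ^+ 2 = 0.
  by apply/eqP; rewrite eq_le H sumr_ge0 // => i _; rewrite sqr_ge0.
apply/matrixP => i j; rewrite (ord1 j) mxE.
have := @psumr_eq0P _ _ xpredT (fun i => a i 0 ^+ 2) (fun i _ => sqr_ge0 (a i 0)) H0 i isT.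
by move/eqP; rewrite sqrf_eq0 => /eqP.
Qed.

Lemma vnorm_le a b (t : R) : 0 <= t ->
  (forall i, (a i 0) ^+ 2 <= t * (b i 0) ^+ 2) -> vnorm a <= Num.sqrt t * vnorm b.
Proof.
move=> t0 H; rewrite /vnorm -sqrtrM // ler_sqrt.
  by rewrite mulr_sumr; apply: ler_sum => i _; apply: H.
by rewrite mulr_ge0 // sumr_ge0 // => i _; rewrite sqr_ge0.
Qed.

Lemma cauchy_schwarz a b :
  \sum_i a i 0 * b i 0 <= vnorm a * vnorm b.
Proof.
set A := vnorm a; set B := vnorm b.
have HA : 0 <= A by apply: vnorm_ge0.
have HB : 0 <= B by apply: vnorm_ge0.
have key : 2 * (A * B) * (\sum_i a i 0 * b i 0) <= 2 * (A * B) ^+ 2.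
  have -> : 2 * (A * B) ^+ 2 = \sum_i ((a i 0) ^+ 2 * B ^+ 2 + (b i 0) ^+ 2 * A ^+ 2).
    rewrite big_split /= -!mulr_suml -!vnorm_sq -/A -/B.
    by rewrite [B ^+ 2 * _]mulrC -exprMn mulr_natl mulr2n.
  rewrite mulr_sumr; apply: ler_sum => i _.
  have e : a i 0 ^+ 2 * B ^+ 2 + b i 0 ^+ 2 * A ^+ 2 - 2 * (A * B) * (a i 0 * b i 0)
    = (a i 0 * B - b i 0 * A) ^+ 2 by ring.
  by rewrite -subr_ge0 e sqr_ge0.
have [AB0|ABpos] := eqVneq (A * B) 0.
  move/eqP: AB0; rewrite mulf_eq0 => /orP [] /eqP /vnorm_eq0 ->;
  (rewrite big1; first exact: mulr_ge0);
  by move=> i _; rewrite mxE ?mul0r ?mulr0.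
have ABp : 0 < A * B by rewrite lt_def ABpos (mulr_ge0 HA HB).
have p2 : 0 < 2 * (A * B) by rewrite mulr_gt0.
by rewrite -(ler_pM2l p2) (le_trans key) // expr2 mulrA.
Qed.

Lemma vnorm_triangle a b : vnorm (a + b) <= vnorm a + vnorm b.
Proof.
rewrite -(ler_pXn2r (n:=2)) //; last 2 first.
- by rewrite nnegrE vnorm_ge0.
- by rewrite nnegrE addr_ge0 // vnorm_ge0.
rewrite vnorm_sq sqrrD !vnorm_sq.
have -> : \sum_i (a + b) i 0 ^+ 2 =
   \sum_i a i 0 ^+ 2 + (\sum_i a i 0 * b i 0) *+ 2 + \sum_i b i 0 ^+ 2.
  rewrite -sumrMnl -!big_split; apply: eq_bigr => i _; by rewrite mxE sqrrD.
by rewrite /= lerD2r lerD2l lerMn2r /= cauchy_schwarz.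
Qed.

Lemma vnormZ (s : R) a : vnorm (s *: a) = `|s| * vnorm a.
Proof.
rewrite /vnorm -sqrtr_sqr -sqrtrM ?sqr_ge0 // mulr_sumr; congr Num.sqrt.
by apply: eq_bigr => i _; rewrite mxE exprMn.
Qed.

End Aux.

Section Core.
Variable R : rcfType.
Variable p : nat.
Variables (lam : 'I_p -> R) (E : 'M[R]_p) (x : R) (k : 'I_p) (c : R).
Hypothesis inj : injective lam.
Hypothesis kmin : forall m : 'I_p, `|lam k - x| <= `|lam m - x|.
Hypothesis Hop : is_opnorm (absDk_half lam x k *m E *m absDk_half lam x k) c.
Hypothesis c1 : c < 1.

Definition hh (j : 'I_p) : R := if j == k then 0 else (Num.sqrt `|lam j - x|)^-1.
Definition dd (j : 'I_p) : R := if j == k then 0 else - (lam j - x)^-1.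
Definition ss (j : 'I_p) : R := if j == k then 0 else - Num.sg (lam j - x).

Lemma Hmul n (M : 'M[R]_(p, n)) i j : (absDk_half lam x k *m M) i j = hh i * M i j.
Proof. by rewrite mul_diag_mx !mxE. Qed.

Lemma Dmul n (M : 'M[R]_(p, n)) i j : (Dk lam x k *m M) i j = dd i * M i j.
Proof. by rewrite mul_diag_mx !mxE. Qed.

Lemma dneq0 j : j != k -> lam j - x != 0.
Proof.
move=> jk; apply/negP => /eqP d0.
have := kmin j; rewrite d0 normr0 normr_le0 subr_eq0 => /eqP hk.
move: d0 => /eqP; rewrite subr_eq0 -hk => /eqP /inj ej.
by move: jk; rewrite ej eqxx.
Qed.

Lemma dd_hs j : dd j = hh j * (ss j * hh j).
Proof.
rewrite /dd /hh /ss; case: (eqVneq j k) => [_|jk]; first by rewrite mul0r.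
have d0 := dneq0 _ jk.
set d := lam j - x.
have e t : (Num.sqrt `|d|)^-1 * (t * (Num.sqrt `|d|)^-1) = t * `|d|^-1.
  by rewrite mulrCA -invfM -expr2 sqr_sqrtr.
rewrite e; have [dn|dp|dz] := ltrgtP d 0.
- by rewrite ltr0_sg // ltr0_norm // opprK mul1r invrN.
- by rewrite gtr0_sg // gtr0_norm // mulN1r.
- by move: d0; rewrite -/d dz eqxx.
Qed.

Lemma ss_sq j : ss j ^+ 2 <= 1.
Proof.
rewrite /ss; case: (j == k); first by rewrite expr0n ler01.
have [dn|dp|dz] := ltrgtP (lam j - x) 0.
- by rewrite ltr0_sg // opprK expr1n.
- by rewrite gtr0_sg // sqrrN expr1n.
- by rewrite dz sgr0 oppr0 expr0n ler01.
Qed.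

Lemma delta_ge0 : 0 <= delta lam k.
Proof.
rewrite /delta; apply: (big_ind (fun y => 0 <= y)).
- by rewrite sumr_ge0.
- by move=> a b a0 b0; rewrite le_min a0 b0.
- by move=> i _.
Qed.

Lemma delta_pos j : j != k -> 0 < delta lam k /\ delta lam k <= `|lam k - lam j|.
Proof.
move=> jk.
have fj : 0 < `|lam k - lam j|.
  rewrite normr_gt0 subr_eq0; apply/negP => /eqP /inj e.
  by move: jk; rewrite e eqxx.
split.
  rewrite /delta; apply: (big_ind (fun y => 0 < y)).
  - rewrite (bigD1 j) //= ltr_wpDr // sumr_ge0 //.
  - by move=> a b a0 b0; rewrite lt_min a0 b0.
  - move=> i ik; rewrite normr_gt0 subr_eq0; apply/negP => /eqP /inj e.
    by move: ik; rewrite e eqxx.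
by rewrite /delta (bigD1 j) //= ge_min lexx.
Qed.

Lemma hh_sq j : hh j ^+ 2 <= 2 / delta lam k.
Proof.
rewrite /hh; case: (eqVneq j k) => [_|jk].
  by rewrite expr0n /= divr_ge0 // delta_ge0.
have [dp dle] := delta_pos _ jk.
have d0 := dneq0 _ jk.
have ad : 0 < `|lam j - x| by rewrite normr_gt0.
rewrite exprVn sqr_sqrtr // -invf_div lef_pV2 ?posrE ?divr_gt0 //.
rewrite ler_pdivrMr //.
have := ler_normB (lam k - x) (lam j - x).
have -> : lam k - x - (lam j - x) = lam k - lam j by rewrite opprB addrA subrK.
move: (kmin j) dle => h1 h2 h3; lra.
Qed.

Lemma HEmu_norm :
  vnorm (absDk_half lam x k *m E *m mu k) =
  Num.sqrt (\sum_(j | j != k) (E j k) ^+ 2 / `|lam j - x|).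
Proof.
rewrite /vnorm; congr Num.sqrt; rewrite [RHS]big_mkcond /=; apply: eq_bigr => j _.
rewrite -mulmxA Hmul /mu -colE mxE /hh.
case: (eqVneq j k) => [->|jk]; first by rewrite mul0r expr0n.
by rewrite /= exprMn exprVn sqr_sqrtr ?normr_ge0 // mulrC.
Qed.

Lemma core (a : R) (v : 'cV[R]_p) :
  v = Dk lam x k *m E *m (a *: mu k + v) ->
  vnorm v <= Num.sqrt (2 / delta lam k) * (1 - c)^-1 *
     (`|a| * Num.sqrt (\sum_(j | j != k) (E j k) ^+ 2 / `|lam j - x|)).
Proof.
move=> Hv.
set w := E *m (a *: mu k + v).
set H := absDk_half lam x k.
have Hvj j : v j 0 = dd j * w j 0 by rewrite {1}Hv -mulmxA Dmul.
set u : 'cV[R]_p := \col_j (ss j * hh j * w j 0).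
have Hu : H *m u = v.
  apply/matrixP => i j; rewrite (ord1 j) /H (Hmul _ u) Hvj mxE dd_hs; ring.
set A1 : 'cV[R]_p := \col_j (ss j * (a *: (H *m E *m mu k)) j 0).
set A2 : 'cV[R]_p := \col_j (ss j * (H *m E *m H *m u) j 0).
have Hu2 : u = A1 + A2.
  have e1 i : (H *m (E *m (H *m u))) i 0 = hh i * (E *m v) i 0 by rewrite Hu Hmul.
  have e2 i : (H *m (E *m mu k)) i 0 = hh i * (E *m mu k) i 0 by rewrite Hmul.
  have e3 i : w i 0 = a * (E *m mu k) i 0 + (E *m v) i 0.
    by rewrite /w mulmxDr -scalemxAr [(a *: (E *m mu k) + E *m v) i 0]mxE [(a *: (E *m mu k)) i 0]mxE.
  apply/matrixP => i j; rewrite (ord1 j) [u i 0]mxE [(A1 + A2) i 0]mxE [A1 i 0]mxE [A2 i 0]mxE.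
  rewrite -!mulmxA e1 [(a *: (H *m (E *m mu k))) i 0]mxE e2 e3; ring.
have n1 : vnorm A1 <= `|a| * Num.sqrt (\sum_(j | j != k) (E j k) ^+ 2 / `|lam j - x|).
  rewrite -HEmu_norm -vnormZ -[vnorm (_ *: _)]mul1r -sqrtr1.
  apply: vnorm_le => // i; rewrite mxE exprMn mul1r.
  by rewrite ler_piMl ?sqr_ge0 // ss_sq.
have n2 : vnorm A2 <= c * vnorm u.
  apply: le_trans (proj1 Hop u).
  rewrite -[vnorm (_ *m u)]mul1r -sqrtr1.
  apply: vnorm_le => // i; rewrite mxE exprMn mul1r.
  by rewrite ler_piMl ?sqr_ge0 // ss_sq.
have nu : vnorm u <= (1 - c)^-1 *
     (`|a| * Num.sqrt (\sum_(j | j != k) (E j k) ^+ 2 / `|lam j - x|)).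
  rewrite ler_pdivlMl ?subr_gt0 //.
  have := @vnorm_triangle _ _ A1 A2; rewrite -Hu2 => tri.
  move: tri n1 n2; set S := _ * Num.sqrt _; move=> h1 h2 h3; nra.
have nv : vnorm v <= Num.sqrt (2 / delta lam k) * vnorm u.
  rewrite -Hu; apply: vnorm_le; first by rewrite divr_ge0 ?delta_ge0.
  move=> i; rewrite /H Hmul exprMn ler_wpM2r ?sqr_ge0 //; exact: hh_sq.
rewrite -mulrA; apply: (le_trans nv); apply: ler_wpM2l => //; exact: sqrtr_ge0.
Qed.

End Core.

Lemma eig_entry (R : rcfType) (p : nat) (lam : 'I_p -> R) (E : 'M[R]_p) (x : R) (k : 'I_p)
  (inj : injective lam) (kmin : forall m : 'I_p, `|lam k - x| <= `|lam m - x|)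
  (y : 'cV[R]_p) : (Sigma lam + E) *m y = x *: y ->
  forall j, (Dk lam x k *m E *m y) j 0 = if j == k then 0 else y j 0.
Proof.
move=> Hy j; rewrite -mulmxA Dmul /dd.
case: (eqVneq j k) => [_|jk]; first by rewrite mul0r.
have h := congr1 (fun M : 'cV[R]_p => M j 0) Hy; rewrite mulmxDl /= in h.
move: h; set Ey := (E *m y) j 0 => h.
rewrite mxE /Sigma mul_diag_mx !mxE -/Ey /= in h.
have -> : Ey = (x - lam j) * y j 0.
  by rewrite mulrBl -h /Ey mxE; ring.
have d0 := @dneq0 R p lam x k inj kmin j jk.
by field.
Qed.

Theorem mainTheorem5 (R : rcfType) (p : nat) (lam : 'I_p -> R) (E : 'M[R]_p)
    (x : R) (k : 'I_p) (c : R) :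
  (forall j, 0 <= lam j) ->
  injective lam ->
  E^T = E ->
  (exists2 v : 'cV[R]_p, v != 0 & (Sigma lam + E) *m v = x *: v) ->
  (forall m : 'I_p, `|lam k - x| <= `|lam m - x|) ->
  is_opnorm (absDk_half lam x k *m E *m absDk_half lam x k) c ->
  c < 1 ->
  (1%:M - Dk lam x k *m E *m Pk k) \in unitmx /\
  (forall eta : 'cV[R]_p, eta != 0 -> (Sigma lam + E) *m eta = x *: eta ->
     eta k 0 != 0 /\
     vnorm ((eta k 0)^-1 *: eta - mu k) <=
       Num.sqrt (2 / delta lam k) * (1 - c)^-1 *
       Num.sqrt (\sum_(j | j != k) (E j k) ^+ 2 / `|lam j - x|)).
Proof.
move=> lam0 inj Esym _ kmin Hop c1.
have zero_of (z : 'cV[R]_p) : z = Dk lam x k *m E *m (0 *: mu k + z) -> z = 0.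
  move=> hz; have := @core R p lam E x k c inj kmin Hop c1 0 z hz.
  rewrite normr0 !mul0r mulr0 => hle; apply: vnorm_eq0.
  by apply/eqP; rewrite eq_le hle vnorm_ge0.
split.
  rewrite unitmxE unitfE -det_tr; apply/negP => /det0P [r rnz hr].
  set A := (1%:M - _) in hr.
  have hz : A *m r^T = 0 by apply: trmx_inj; rewrite trmx_mul trmxK hr trmx0.
  move: hz; rewrite /A mulmxBl mul1mx => /eqP; rewrite subr_eq0 => /eqP hz.
  have zk : r^T k 0 = 0 by rewrite hz -!mulmxA Dmul /dd eqxx mul0r.
  have Pz : Pk k *m r^T = r^T.
    apply/matrixP => i j; rewrite (ord1 j) /Pk mul_diag_mx !mxE.
    case: (eqVneq i k) => [->|ik]; first by rewrite mul0r -zk mxE.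
    by rewrite mul1r.
  have : r^T = 0.
    apply: zero_of; rewrite scale0r add0r {1}hz.
    by rewrite -(mulmxA (Dk lam x k *m E)) Pz.
  move/(congr1 trmx); rewrite trmxK trmx0 => r0.
  by move: rnz; rewrite r0 eqxx.
move=> eta etanz Heta.
have etak : eta k 0 != 0.
  apply/negP => /eqP e0; move: etanz; rewrite (zero_of eta) ?eqxx //.
  rewrite scale0r add0r; apply/matrixP => i j; rewrite (ord1 j) (@eig_entry R p lam E x k inj kmin _ Heta).
  by case: (eqVneq i k) => [->|].
split => //.
set eta' := (eta k 0)^-1 *: eta.
have He' : (Sigma lam + E) *m eta' = x *: eta'.
  by rewrite /eta' -scalemxAr Heta !scalerA mulrC.
have := @core R p lam E x k c inj kmin Hop c1 1 (eta' - mu k).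
rewrite normr1 mul1r; apply.
rewrite scale1r [mu k + _]addrC subrK; apply/matrixP => i j; rewrite (ord1 j) (@eig_entry R p lam E x k inj kmin _ He').
rewrite /eta' /mu !mxE.
case: (eqVneq i k) => [->|ik]; first by rewrite mulVf // eqxx subrr.
by rewrite /= subr0.
Qed.
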